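(* Let $s>1/2$. Then for every $t\in\mathbb{R}$ the trilinear operator $R_3$ defined in the context maps $(\dot H^s)^3$ into $\dot H^s$ and satisfies $$\|R_3(u,v,w)\|_{\dot H^s}\le c_6(s)\|u\|_{\dot H^s}\|v\|_{\dot H^s}\|w\|_{\dot H^s},$$ with a constant $c_6(s)$ depending only on $s$.
   Context: Write $\mathbb{Z}_0=\mathbb{Z}\setminus\{0\}$. For $s\in\mathbb{R}$, $\dot H^s$ denotes the Hilbert space of complex sequences $v=(v_k)_{k\in\mathbb{Z}_0}$ with $\|v\|_{\dot H^s}^2=\sum_{k\in\mathbb{Z}_0}|k|^{2s}|v_k|^2<\infty$. For $t\in\mathbb{R}$, $$R_3(u,v,w)_k=\sum_{k_1+k_2+k_3=k,\ k_1,k_2,k_3\in\mathbb{Z}_0}\frac{e^{3i(k_1+k_2)(k_2+k_3)(k_3+k_1)t}}{k_1}u_{k_1}v_{k_2}w_{k_3},\qquad k\in\mathbb{Z}_0.$$ *)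

(* Defs.v *)
From Stdlib Require Import Reals ZArith List.
From Coquelicot Require Import Coquelicot.
Open Scope R_scope.

(* Sequences indexed by Z; the value at index 0 is irrelevant (index set Z_0). *)
Definition seqC := Z -> C.

Definition lsum {I : Type} (f : I -> C) (l : list I) : C :=
  fold_right (fun i acc => Cplus (f i) acc) (RtoC 0) l.

Definition lsumR {I : Type} (f : I -> R) (l : list I) : R :=
  fold_right (fun i acc => f i + acc) 0 l.

Definition abs_summable {I : Type} (f : I -> C) : Prop :=
  exists M : R, forall l : list I, NoDup l -> lsumR (fun i => Cmod (f i)) l <= M.

(* Unconditional sum (limit along the net of finite index sets). *)
Definition has_sum {I : Type} (f : I -> C) (a : C) : Prop :=
  forall eps : R, 0 < eps -> exists l0 : list I,
    forall l : list I, NoDup l -> incl l0 l -> Cmod (Cminus (lsum f l) a) < eps.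

(* |k|^{2s} |v_k|^2 for k in Z_0, summed over k = ±(n+1). *)
Definition Hs_term (s : R) (v : seqC) (n : nat) : R :=
  Rpower (INR (S n)) (2 * s) *
    ((Cmod (v (Z.of_nat (S n))))^2 + (Cmod (v (- Z.of_nat (S n))%Z))^2).

Definition inHs (s : R) (v : seqC) : Prop := ex_series (Hs_term s v).

Definition Hs_norm (s : R) (v : seqC) : R := sqrt (Series (Hs_term s v)).

Definition cexpi (x : R) : C := (cos x, sin x).

Definition R3_term (t : R) (u v w : seqC) (k : Z) (p : Z * Z) : C :=
  let k1 := fst p in let k2 := snd p in let k3 := (k - k1 - k2)%Z in
  if (Z.eqb k1 0 || Z.eqb k2 0 || Z.eqb k3 0)%bool then RtoC 0
  else Cmult (Cmult (Cmult
         (Cmult (cexpi (3 * IZR ((k1 + k2) * (k2 + k3) * (k3 + k1)) * t))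
                (Cinv (RtoC (IZR k1))))
         (u k1)) (v k2)) (w k3).

Definition is_R3 (t : R) (u v w r : seqC) : Prop :=
  forall k : Z, k <> 0%Z ->
    abs_summable (R3_term t u v w k) /\ has_sum (R3_term t u v w k) (r k).

(* Main.v *)
Require Import Defs.
From Stdlib Require Import Reals ZArith List.
From Coquelicot Require Import Coquelicot.
From Stdlib Require Import Lia Lra Permutation IndefiniteDescription.
Open Scope R_scope.


Lemma lsumR_cons {I : Type} (f : I -> R) a l : lsumR f (a :: l) = f a + lsumR f l.
Proof. reflexivity. Qed.

Lemma lsumR_app {I : Type} (f : I -> R) l1 l2 : lsumR f (l1 ++ l2) = lsumR f l1 + lsumR f l2.
Proof. induction l1; simpl; [ring| rewrite IHl1; ring]. Qed.

Lemma lsumR_nonneg {I : Type} (f : I -> R) l : (forall i, 0 <= f i) -> 0 <= lsumR f l.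
Proof. intros H; induction l; simpl; [lra| specialize (H a); lra]. Qed.

Lemma lsumR_le {I : Type} (f g : I -> R) l : (forall i, In i l -> f i <= g i) -> lsumR f l <= lsumR g l.
Proof. induction l; simpl; intros H; [lra|].
  assert (f a <= g a) by (apply H; auto). assert (lsumR f l <= lsumR g l) by (apply IHl; auto). lra. Qed.

Lemma lsumR_plus {I : Type} (f g : I -> R) l : lsumR (fun i => f i + g i) l = lsumR f l + lsumR g l.
Proof. induction l; simpl; [ring| rewrite IHl; ring]. Qed.

Lemma lsumR_scal {I : Type} c (f : I -> R) l : lsumR (fun i => c * f i) l = c * lsumR f l.
Proof. induction l; simpl; [ring| rewrite IHl; ring]. Qed.

Lemma lsumR_perm {I : Type} (f : I -> R) l l' : Permutation l l' -> lsumR f l = lsumR f l'.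
Proof. induction 1; simpl; try lra. Qed.

Lemma lsum_app {I : Type} (f : I -> C) l1 l2 : lsum f (l1 ++ l2) = Cplus (lsum f l1) (lsum f l2).
Proof. induction l1; simpl. - rewrite Cplus_0_l; auto. - rewrite IHl1, Cplus_assoc; auto. Qed.

Lemma lsum_perm {I : Type} (f : I -> C) l l' : Permutation l l' -> lsum f l = lsum f l'.
Proof. induction 1; simpl; try congruence.
  rewrite !Cplus_assoc, (Cplus_comm (f y)); auto. Qed.

Lemma lsum_Cmod {I : Type} (f : I -> C) l : Cmod (lsum f l) <= lsumR (fun i => Cmod (f i)) l.
Proof. induction l; simpl. - rewrite Cmod_0; lra.
  - eapply Rle_trans; [apply Cmod_triangle|]. lra. Qed.

Lemma nodup_incl_perm {I : Type} (l l' : list I) : NoDup l -> incl l l' -> exists l'', Permutation l' (l ++ l'').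
Proof.
  revert l'. induction l as [|a l IH]; intros l' Hn Hi.
  - exists l'; simpl; apply Permutation_refl.
  - inversion Hn; subst.
    assert (Ha : In a l') by (apply Hi; left; auto).
    destruct (in_split _ _ Ha) as [l1 [l2 E]]. subst l'.
    destruct (IH (l1 ++ l2)) as [l3 P]; auto.
    + intros x Hx. assert (In x (l1 ++ a :: l2)) by (apply Hi; right; auto).
      apply in_app_or in H. apply in_or_app. destruct H as [H|[H|H]]; auto.
      subst; contradiction.
    + exists l3. simpl. eapply perm_trans; [apply Permutation_sym, Permutation_middle|].
      apply perm_skip; auto.
Qed.

Lemma lsumR_incl {I : Type} (f : I -> R) l l' : (forall i, 0 <= f i) -> NoDup l -> incl l l' -> lsumR f l <= lsumR f l'.
Proof. intros Hf Hn Hi. destruct (nodup_incl_perm l l' Hn Hi) as [l'' P].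
  rewrite (lsumR_perm f _ _ P), lsumR_app. pose proof (lsumR_nonneg f l'' Hf). lra. Qed.

Lemma Cminus_plus_l (x y : C) : Cminus (Cplus x y) x = y.
Proof. destruct x, y; unfold Cminus, Cplus, Copp; simpl; f_equal; ring. Qed.

Lemma lsum_diff {I : Type} (f : I -> C) l0 l : NoDup l0 -> incl l0 l ->
  Cmod (Cminus (lsum f l) (lsum f l0)) <= lsumR (fun i => Cmod (f i)) l - lsumR (fun i => Cmod (f i)) l0.
Proof. intros Hn Hi. destruct (nodup_incl_perm l0 l Hn Hi) as [l'' P].
  rewrite (lsum_perm f _ _ P), (lsumR_perm _ _ _ P), lsum_app, lsumR_app, Cminus_plus_l.
  pose proof (lsum_Cmod f l''). lra. Qed.

Lemma lsumR_map {I J : Type} (h : J -> I) (f : I -> R) l : lsumR f (map h l) = lsumR (fun j => f (h j)) l.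
Proof. induction l; simpl; auto. rewrite IHl; auto. Qed.

Lemma lsumR_exch {I J : Type} (F : I -> J -> R) l1 l2 :
  lsumR (fun a => lsumR (fun b => F a b) l2) l1 = lsumR (fun b => lsumR (fun a => F a b) l1) l2.
Proof. induction l1; simpl.
  - induction l2; simpl; auto. rewrite <- IHl2; ring.
  - rewrite IHl1, lsumR_plus. auto. Qed.

Lemma lsumR_prod {I J : Type} (F : I * J -> R) l1 l2 :
  lsumR F (list_prod l1 l2) = lsumR (fun a => lsumR (fun b => F (a, b)) l2) l1.
Proof. induction l1; simpl; auto. rewrite lsumR_app, lsumR_map, IHl1; auto. Qed.

Lemma NoDup_prod {I J : Type} (l1 : list I) (l2 : list J) : NoDup l1 -> NoDup l2 -> NoDup (list_prod l1 l2).
Proof. induction 1; intros H2; simpl; [constructor|].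
  apply NoDup_app; auto.
  - apply FinFun.Injective_map_NoDup; auto. intros a b E; inversion E; auto.
  - intros [a b] Ha Hb. apply in_map_iff in Ha. destruct Ha as [c [E _]]. inversion E; subst.
    apply in_prod_iff in Hb. tauto.
Qed.

Lemma CS_quad (A B C0 : R) : 0 <= A -> (forall x, 0 <= A * x^2 + 2 * C0 * x + B) -> C0^2 <= A * B.
Proof. intros HA H.
  destruct (Req_dec A 0) as [E|E].
  - subst. destruct (Req_dec C0 0) as [E'|E']. { subst; specialize (H 0); nra. }
    specialize (H (- (B + 1) / (2 * C0))).
    exfalso. replace (0 * (- (B + 1) / (2 * C0)) ^ 2 + 2 * C0 * (- (B + 1) / (2 * C0)) + B) with (-1) in H by (field; auto). lra.
  - specialize (H (- C0 / A)).
    replace (A * (- C0 / A) ^ 2 + 2 * C0 * (- C0 / A) + B) with (B - C0^2 / A) in H by (field; auto).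
    assert (0 < A) by lra.
    assert (C0^2 / A <= B) by lra.
    apply Rmult_le_compat_l with (r := A) in H1; [|lra].
    replace (A * (C0^2/A)) with (C0^2) in H1 by (field; auto). lra.
Qed.

Lemma CS {I : Type} (a b : I -> R) l :
  (lsumR (fun i => a i * b i) l)^2 <= lsumR (fun i => a i ^2) l * lsumR (fun i => b i ^2) l.
Proof.
  apply CS_quad. apply lsumR_nonneg; intros; nra.
  intros x.
  assert (E : lsumR (fun i => (a i * x + b i)^2) l =
    lsumR (fun i => a i ^2) l * x^2 + 2 * lsumR (fun i => a i * b i) l * x + lsumR (fun i => b i ^2) l).
  { induction l; [simpl; ring| rewrite !lsumR_cons, IHl; ring]. }
  rewrite <- E. apply lsumR_nonneg; intros; apply pow2_ge_0.
Qed.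



Fixpoint zr (M : nat) : list Z :=
  match M with
  | O => 0%Z :: nil
  | S m => Z.of_nat (S m) :: (- Z.of_nat (S m))%Z :: zr m
  end.

Lemma in_zr M j : In j (zr M) <-> (Z.abs j <= Z.of_nat M)%Z.
Proof.
  induction M; simpl.
  - split; [intros [H|[]]; subst; simpl; lia| intros; left; lia].
  - rewrite IHM. split.
    + intros [H|[H|H]]; lia.
    + intros H. destruct (Z.eq_dec j (Z.pos (Pos.of_succ_nat M))) as [E|E]; [left; lia|].
      destruct (Z.eq_dec j (Z.neg (Pos.of_succ_nat M))) as [E'|E']; [right; left; lia|].
      right; right; lia.
Qed.

Lemma NoDup_zr M : NoDup (zr M).
Proof.
  induction M; simpl.
  - constructor; [auto| constructor].
  - constructor.
    + intros [H|H]; [lia|]. apply in_zr in H; lia.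
    + constructor; auto. intros H; apply in_zr in H; lia.
Qed.

Lemma zr_mono N N' : (N <= N')%nat -> incl (zr N) (zr N').
Proof. intros H j Hj. apply in_zr in Hj; apply in_zr; lia. Qed.

Lemma zr_cover (l : list Z) : exists M, incl l (zr M).
Proof.
  induction l as [|a l [M HM]].
  - exists O; intros x [].
  - exists (Nat.max M (Z.to_nat (Z.abs a))). intros x [H|H].
    + subst; apply in_zr; lia.
    + apply HM, in_zr in H; apply in_zr; lia.
Qed.

Definition box N := list_prod (zr N) (zr N).

Lemma NoDup_box N : NoDup (box N).
Proof. apply NoDup_prod; apply NoDup_zr. Qed.

Lemma box_mono N N' : (N <= N')%nat -> incl (box N) (box N').
Proof. intros H [a b] Hp. apply in_prod_iff in Hp. apply in_prod_iff. split; apply (zr_mono N N' H); tauto. Qed.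

Lemma box_cover (l : list (Z * Z)) : exists N, incl l (box N).
Proof.
  destruct (zr_cover (map fst l)) as [M1 H1]. destruct (zr_cover (map snd l)) as [M2 H2].
  exists (Nat.max M1 M2). intros [a b] Hp. apply in_prod_iff. split.
  - apply (zr_mono M1); [lia|]. apply H1. apply in_map_iff; exists (a,b); auto.
  - apply (zr_mono M2); [lia|]. apply H2. apply in_map_iff; exists (a,b); auto.
Qed.

Lemma map_shift_NoDup (c : Z) l : NoDup l -> NoDup (map (fun k => (c - k)%Z) l).
Proof. intros; apply FinFun.Injective_map_NoDup; auto. intros x y E; lia. Qed.

Lemma map_shift_NoDup' (c : Z) l : NoDup l -> NoDup (map (fun k => (k - c)%Z) l).
Proof. intros; apply FinFun.Injective_map_NoDup; auto. intros x y E; lia. Qed.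


Lemma lim_bound (u : nat -> R) (l c d : R) N : is_lim_seq u l ->
  (forall m, (N <= m)%nat -> Rabs (u m - c) <= d) -> Rabs (l - c) <= d.
Proof.
  intros Hl H.
  assert (H1 : is_lim_seq (fun m => Rabs (u m - c)) (Rabs (l - c))).
  { apply (is_lim_seq_abs (fun m => u m - c) (l - c)).
    apply is_lim_seq_minus'; auto. apply is_lim_seq_const. }
  assert (H2 := is_lim_seq_le_loc (fun m => Rabs (u m - c)) (fun _ => d) _ _
    (ex_intro _ N H) H1 (is_lim_seq_const d)).
  simpl in H2; auto.
Qed.

Lemma Cmod_le_sum (z : C) : Cmod z <= Rabs (fst z) + Rabs (snd z).
Proof.
  destruct z as [x y]; unfold Cmod; simpl.
  rewrite <- (sqrt_pow2 (Rabs x + Rabs y)) by (pose proof (Rabs_pos x); pose proof (Rabs_pos y); lra).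
  apply sqrt_le_1_alt.
  pose proof (Rabs_pos x); pose proof (Rabs_pos y).
  assert (x * x = Rabs x * Rabs x) by (rewrite <- Rabs_mult; symmetry; apply Rabs_right; nra).
  assert (y * y = Rabs y * Rabs y) by (rewrite <- Rabs_mult; symmetry; apply Rabs_right; nra).
  nra.
Qed.

Lemma lim_seq_cauchy_ex (u : nat -> R) : ex_finite_lim_seq u ->
  forall eps, 0 < eps -> exists N, forall n m, (N <= n)%nat -> (N <= m)%nat -> Rabs (u n - u m) < eps.
Proof. intros H eps He. apply ex_lim_seq_cauchy_corr in H. exact (H (mkposreal eps He)). Qed.

Section Summ.
Variable f : Z * Z -> C.
Let B N := lsumR (fun p => Cmod (f p)) (box N).

Lemma B_mono n m : (n <= m)%nat -> B n <= B m.
Proof. intros H; unfold B; apply lsumR_incl; [intros; apply Cmod_ge_0| apply NoDup_box| apply box_mono; auto]. Qed.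

Lemma S_diff n m : (n <= m)%nat -> Cmod (Cminus (lsum f (box m)) (lsum f (box n))) <= B m - B n.
Proof. intros H; apply lsum_diff; [apply NoDup_box| apply box_mono; auto]. Qed.

Lemma summable M : (forall N, B N <= M) ->
  exists a A, has_sum f a /\ abs_summable f /\ Cmod a <= A /\ is_lim_seq B A.
Proof.
  intros HM.
  assert (Hex : ex_finite_lim_seq B).
  { apply (ex_finite_lim_seq_incr _ M); auto. intros; apply B_mono; lia. }
  destruct Hex as [A HA].
  assert (HBA : forall n, B n <= A).
  { apply is_lim_seq_incr_compare; auto. intros; apply B_mono; lia. }
  assert (HC := lim_seq_cauchy_ex B (ex_intro _ A HA)).
  set (S N := lsum f (box N)).
  assert (Hd : forall n m, (n <= m)%nat -> Rabs (fst (S m) - fst (S n)) <= B m - B n /\ Rabs (snd (S m) - snd (S n)) <= B m - B n).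
  { intros n m H. pose proof (S_diff n m H). pose proof (Rmax_Cmod (Cminus (S m) (S n))).
    unfold Cminus, Cplus, Copp in H1 |- *. simpl in H1 |- *. fold (S m) (S n) in H0.
    unfold Cminus, Cplus, Copp in H0. simpl in H0.
    assert (Rmax (Rabs (fst (S m) + - fst (S n))) (Rabs (snd (S m) + - snd (S n))) <= B m - B n) by lra.
    split; [eapply Rle_trans; [apply Rmax_l| exact H2] | eapply Rle_trans; [apply Rmax_r| exact H2]]. }
  assert (Hcomp : forall (g : nat -> R), (forall n m, (n <= m)%nat -> Rabs (g m - g n) <= B m - B n) ->
     exists l : R, is_lim_seq g l /\ forall n, Rabs (l - g n) <= A - B n).
  { intros g Hg.
    assert (Hgc : ex_finite_lim_seq g).
    { apply ex_lim_seq_cauchy_corr. intros eps. destruct (HC eps (cond_pos eps)) as [N HN].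
      exists N. intros n m Hn Hm. destruct (Nat.le_ge_cases n m) as [L|L].
      - specialize (HN m n Hm Hn). specialize (Hg n m L). rewrite Rabs_minus_sym.
        eapply Rle_lt_trans; [apply Hg|]. eapply Rle_lt_trans; [apply Rle_abs|]. auto.
      - specialize (HN n m Hn Hm). specialize (Hg m n L).
        eapply Rle_lt_trans; [apply Hg|]. eapply Rle_lt_trans; [apply Rle_abs|]. auto. }
    destruct Hgc as [l Hl]. exists l; split; auto.
    intros n. apply (lim_bound g l (g n) (A - B n) n Hl).
    intros m Hm. specialize (Hg n m Hm). specialize (HBA m). lra. }
  destruct (Hcomp (fun N => fst (S N))) as [lr [Hlr Hbr]]. { intros; apply Hd; auto. }
  destruct (Hcomp (fun N => snd (S N))) as [li [Hli Hbi]]. { intros; apply Hd; auto. }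
  set (a := (lr, li) : C).
  assert (Hsa : forall n, Cmod (Cminus (S n) a) <= 2 * (A - B n)).
  { intros n. eapply Rle_trans; [apply Cmod_le_sum|]. simpl.
    specialize (Hbr n); specialize (Hbi n). rewrite Rabs_minus_sym in Hbr, Hbi. unfold Rminus in Hbr, Hbi. lra. }
  assert (Htail : forall eps, 0 < eps -> exists N, A - B N < eps).
  { intros eps He. destruct (proj2 (is_lim_seq_spec B A) HA (mkposreal eps He)) as [N HN].
    exists N. specialize (HN N (le_n _)). simpl in HN. apply Rabs_lt_between in HN. lra. }
  assert (Hlist : forall l, NoDup l -> lsumR (fun p => Cmod (f p)) l <= A).
  { intros l Hl. destruct (box_cover l) as [N HN]. eapply Rle_trans; [| apply (HBA N)].
    apply lsumR_incl; auto. intros; apply Cmod_ge_0. }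
  exists a, A. repeat split; auto.
  - intros eps He. destruct (Htail (eps / 3)) as [N HN]; [lra|]. exists (box N).
    intros l Hl Hi.
    assert (H1 := lsum_diff f (box N) l (NoDup_box N) Hi). fold (S N) in H1.
    assert (H2 := Hlist l Hl). assert (H3 := Hsa N).
    assert (E : Cminus (lsum f l) a = Cplus (Cminus (lsum f l) (S N)) (Cminus (S N) a)).
    { destruct (lsum f l), (S N), a; unfold Cminus, Cplus, Copp; simpl; f_equal; ring. }
    rewrite E. eapply Rle_lt_trans; [apply Cmod_triangle|]. fold (B N) in H1. lra.
  - exists A. auto.
  - apply Rle_plus_epsilon. intros eps He. destruct (Htail (eps / 2)) as [N HN]; [lra|].
    assert (E : a = Cplus (S N) (Cminus a (S N))).
    { destruct (S N), a; unfold Cminus, Cplus, Copp; simpl; f_equal; ring. }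
    rewrite E. eapply Rle_trans; [apply Cmod_triangle|].
    assert (Cmod (S N) <= B N) by apply lsum_Cmod.
    assert (Cmod (Cminus a (S N)) = Cmod (Cminus (S N) a)).
    { rewrite <- Cmod_opp. f_equal. destruct (S N), a; unfold Cminus, Cplus, Copp; simpl; f_equal; ring. }
    rewrite H0. specialize (Hsa N). lra.
Qed.
End Summ.


Lemma ln_le_sub1 y : 0 < y -> ln y <= y - 1.
Proof. intros H. pose proof (exp_ineq1_le (ln y)). rewrite exp_ln in H0; auto. lra. Qed.

Lemma Rpower_1l y : Rpower 1 y = 1.
Proof. unfold Rpower. rewrite ln_1, Rmult_0_r, exp_0. auto. Qed.

Lemma Rpower_pos x y : 0 < Rpower x y.
Proof. unfold Rpower; apply exp_pos. Qed.

Lemma key_ineq (b x : R) : 0 < b -> 1 <= x ->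
  b * Rpower (x + 1) (- (b + 1)) <= Rpower x (- b) - Rpower (x + 1) (- b).
Proof.
  intros Hb Hx. unfold Rpower.
  set (L := ln (x + 1)). set (l := ln x).
  assert (H1 : l - L <= - / (x + 1)).
  { unfold l, L. rewrite <- ln_div by lra. eapply Rle_trans; [apply ln_le_sub1; apply Rdiv_lt_0_compat; lra|].
    apply Req_le. field. lra. }
  assert (H2 : exp (- b * l) = exp (- b * L) * exp (b * (L - l))).
  { rewrite <- exp_plus. f_equal; ring. }
  assert (H3 : 1 + b * (L - l) <= exp (b * (L - l))) by apply exp_ineq1_le.
  assert (H4 : exp (- (b + 1) * L) = exp (- b * L) * / (x + 1)).
  { replace (- (b + 1) * L) with (- b * L + - L) by ring. rewrite exp_plus, exp_Ropp. unfold L. rewrite exp_ln by lra. auto. }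
  rewrite H4, H2. pose proof (exp_pos (- b * L)).
  assert (b * / (x + 1) <= b * (L - l)).
  { apply Rmult_le_compat_l; lra. }
  nra.
Qed.

Section Weights.
Variable s : R.
Hypothesis hs : 1/2 < s.

Definition wt (j : Z) : R := Rpower (IZR (Z.abs j)) s.
Definition xw (j : Z) : R := if Z.eqb j 0 then 0 else / wt j.
Definition hat (a : seqC) (j : Z) : R := if Z.eqb j 0 then 0 else wt j * Cmod (a j).

Lemma wt_pos j : 0 < wt j.
Proof. apply Rpower_pos. Qed.

Lemma wt_ge1 j : j <> 0%Z -> 1 <= wt j.
Proof. intros H. unfold wt. rewrite <- (Rpower_O (IZR (Z.abs j))) at 1.
  - apply Rle_Rpower; [apply IZR_le; lia| lra].
  - apply IZR_lt; lia. Qed.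

Lemma xw_nonneg j : 0 <= xw j.
Proof. unfold xw. destruct (Z.eqb j 0); [lra|]. left; apply Rinv_0_lt_compat, wt_pos. Qed.

Lemma hat_nonneg a j : 0 <= hat a j.
Proof. unfold hat. destruct (Z.eqb j 0); [lra|]. apply Rmult_le_pos; [left; apply wt_pos| apply Cmod_ge_0]. Qed.

Lemma xw2 (n : nat) j : (Z.abs j = Z.of_nat (S n))%Z -> xw j ^ 2 = Rpower (INR n + 1) (- (2 * s - 1 + 1)).
Proof.
  intros H. unfold xw. destruct (Z.eqb_spec j 0); [lia|]. unfold wt. rewrite H.
  rewrite <- INR_IZR_INZ, S_INR.
  replace (- (2 * s - 1 + 1)) with (- s + - s) by ring. rewrite Rpower_plus, Rpower_Ropp. ring.
Qed.

Definition Ybd := 2 + 2 / (2 * s - 1).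

Lemma riem_zr M : lsumR (fun j => xw j ^ 2) (zr M) <= Ybd.
Proof.
  set (b := 2 * s - 1). assert (Hb : 0 < b) by (unfold b; lra).
  assert (P : forall m, lsumR (fun j => xw j ^ 2) (zr (S m)) <= 2 + (2 / b) * (1 - Rpower (INR (S m)) (- b))).
  { induction m.
    - cbn [zr]. rewrite !lsumR_cons. simpl lsumR.
      rewrite (xw2 0 (Z.of_nat 1)), (xw2 0 (- Z.of_nat 1)) by (simpl; lia).
      simpl INR. replace (0 + 1) with 1 by ring. rewrite !Rpower_1l.
      unfold xw at 1. simpl. fold b. lra.
    - cbn [zr]. rewrite !lsumR_cons. cbn [zr] in IHm. rewrite !lsumR_cons in IHm.
      rewrite (xw2 (S m) (Z.of_nat (S (S m)))), (xw2 (S m) (- Z.of_nat (S (S m)))) by lia.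
      rewrite (xw2 m (Z.of_nat (S m))), (xw2 m (- Z.of_nat (S m))) in IHm by lia.
      fold b in IHm |- *.
      pose proof (key_ineq b (INR (S m)) Hb).
      rewrite S_INR in H |- *. rewrite (S_INR (S m)), S_INR.
      assert (1 <= INR m + 1) by (pose proof (pos_INR m); lra).
      specialize (H H0).
      assert (2 / b * (b * Rpower (INR m + 1 + 1) (- (b + 1))) = 2 * Rpower (INR m + 1 + 1) (- (b + 1))) by (field; lra).
      assert (0 < 2 / b) by (apply Rdiv_lt_0_compat; lra).
      assert (2 / b * (b * Rpower (INR m + 1 + 1) (- (b + 1))) <= 2 / b * (Rpower (INR m + 1) (- b) - Rpower (INR m + 1 + 1) (- b))).
      { apply Rmult_le_compat_l; lra. }
      rewrite (xw2 m (Z.of_nat (S m))), (xw2 m (- Z.of_nat (S m))) by lia.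
      rewrite S_INR in IHm.
      assert (E : 2 / b * (1 - Rpower (INR m + 1) (- b)) + 2 / b * (Rpower (INR m + 1) (- b) - Rpower (INR m + 1 + 1) (- b)) = 2 / b * (1 - Rpower (INR m + 1 + 1) (- b))) by ring.
      fold b. lra. }
  destruct M.
  - simpl. unfold xw. simpl. unfold Ybd. assert (0 < 2 / (2 * s - 1)) by (apply Rdiv_lt_0_compat; lra). lra.
  - eapply Rle_trans; [apply P|]. unfold Ybd. fold b. pose proof (Rpower_pos (INR (S M)) (- b)).
    assert (0 < 2 / b) by (apply Rdiv_lt_0_compat; lra). nra.
Qed.

Lemma riem_list l : NoDup l -> lsumR (fun j => xw j ^ 2) l <= Ybd.
Proof. intros Hl. destruct (zr_cover l) as [M HM]. eapply Rle_trans; [| apply (riem_zr M)].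
  apply lsumR_incl; auto. intros; apply pow2_ge_0. Qed.

Fixpoint psum (f : nat -> R) (M : nat) : R := match M with O => 0 | S m => f m + psum f m end.

Lemma Hs_term_hat a n : Hs_term s a n = hat a (Z.of_nat (S n)) ^ 2 + hat a (- Z.of_nat (S n)) ^ 2.
Proof.
  unfold Hs_term, hat. destruct (Z.eqb_spec (Z.of_nat (S n)) 0); [lia|].
  destruct (Z.eqb_spec (- Z.of_nat (S n)) 0); [lia|].
  unfold wt. rewrite Z.abs_opp. replace (Z.abs (Z.of_nat (S n))) with (Z.of_nat (S n)) by lia. rewrite <- INR_IZR_INZ.
  replace (2 * s) with (s + s) by ring. rewrite Rpower_plus. ring.
Qed.

Lemma hat_zr a M : lsumR (fun j => hat a j ^ 2) (zr M) = psum (Hs_term s a) M.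
Proof.
  induction M.
  - simpl. unfold hat; simpl. ring.
  - cbn [zr psum]. rewrite !lsumR_cons, IHM, Hs_term_hat. ring.
Qed.

Lemma psum_sum_n f M : psum f (S M) = sum_n f M.
Proof. induction M. - simpl. rewrite sum_O. ring.
  - rewrite sum_Sn. cbn [psum] in *. rewrite <- IHM. unfold plus; simpl. ring. Qed.

Lemma psum_mono f M : (forall n, 0 <= f n) -> psum f M <= psum f (S M).
Proof. intros H. simpl. specialize (H M). lra. Qed.

Lemma psum_le_Series f M : (forall n, 0 <= f n) -> ex_series f -> psum f M <= Series f.
Proof.
  intros H Hf. eapply Rle_trans; [apply psum_mono; auto|]. rewrite psum_sum_n.
  assert (Hl : is_lim_seq (sum_n f) (Series f)) by exact (Series_correct f Hf).
  apply (is_lim_seq_incr_compare _ _ Hl). intros n. rewrite sum_Sn. unfold plus; simpl. specialize (H (S n)). lra.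
Qed.

Lemma Hs_term_nonneg a n : 0 <= Hs_term s a n.
Proof. rewrite Hs_term_hat. pose proof (pow2_ge_0 (hat a (Z.of_nat (S n)))). pose proof (pow2_ge_0 (hat a (- Z.of_nat (S n)))). lra. Qed.

Lemma Hs_list a : inHs s a -> forall l, NoDup l -> lsumR (fun j => hat a j ^ 2) l <= Series (Hs_term s a).
Proof.
  intros Ha l Hl. destruct (zr_cover l) as [M HM]. eapply Rle_trans.
  - apply lsumR_incl; [intros; apply pow2_ge_0| exact Hl| exact HM].
  - rewrite hat_zr. apply psum_le_Series; auto. apply Hs_term_nonneg.
Qed.

Lemma Hs_from_bound a Bd : (forall M, lsumR (fun j => hat a j ^ 2) (zr M) <= Bd) ->
  inHs s a /\ Series (Hs_term s a) <= Bd.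
Proof.
  intros H.
  assert (Hb : forall M, sum_n (Hs_term s a) M <= Bd).
  { intros M. rewrite <- psum_sum_n, <- hat_zr. auto. }
  assert (Hinc : forall n, sum_n (Hs_term s a) n <= sum_n (Hs_term s a) (S n)).
  { intros n. rewrite sum_Sn. unfold plus; simpl. pose proof (Hs_term_nonneg a (S n)). lra. }
  destruct (ex_finite_lim_seq_incr _ Bd Hinc Hb) as [l Hl].
  assert (Hs : is_series (Hs_term s a) l) by exact Hl.
  split.
  - exists l; auto.
  - rewrite (is_series_unique _ _ Hs).
    assert (H2 := is_lim_seq_le _ (fun _ => Bd) _ _ Hb Hl (is_lim_seq_const Bd)). simpl in H2. auto.
Qed.

End Weights.


Section Est.
Variable s : R.
Hypothesis hs : 1/2 < s.

Lemma wt_tri k1 k2 k3 : k1 <> 0%Z -> k2 <> 0%Z -> k3 <> 0%Z -> (k1 + k2 + k3 <> 0)%Z ->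
  wt s (k1 + k2 + k3) <= Rpower 3 s * (wt s k1 + wt s k2 + wt s k3).
Proof.
  intros H1 H2 H3 H.
  set (a1 := IZR (Z.abs k1)). set (a2 := IZR (Z.abs k2)). set (a3 := IZR (Z.abs k3)).
  assert (1 <= a1) by (unfold a1; apply IZR_le; lia).
  assert (1 <= a2) by (unfold a2; apply IZR_le; lia).
  assert (1 <= a3) by (unfold a3; apply IZR_le; lia).
  set (m := Rmax a1 (Rmax a2 a3)).
  assert (Hm1 : a1 <= m) by apply Rmax_l.
  assert (Hm2 : a2 <= m) by (eapply Rle_trans; [apply Rmax_l| apply Rmax_r]).
  assert (Hm3 : a3 <= m) by (eapply Rle_trans; [apply Rmax_r| apply Rmax_r]).
  assert (Hk : IZR (Z.abs (k1 + k2 + k3)) <= 3 * m).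
  { assert (IZR (Z.abs (k1 + k2 + k3)) <= a1 + a2 + a3).
    { unfold a1, a2, a3. rewrite <- !plus_IZR. apply IZR_le. lia. } lra. }
  unfold wt at 1. eapply Rle_trans.
  { apply Rle_Rpower_l; [lra| split; [apply IZR_lt; lia| exact Hk]]. }
  rewrite <- Rpower_mult_distr by lra.
  apply Rmult_le_compat_l; [left; apply Rpower_pos|].
  unfold wt; fold a1 a2 a3.
  pose proof (Rpower_pos a1 s); pose proof (Rpower_pos a2 s); pose proof (Rpower_pos a3 s).
  unfold m, Rmax. destruct (Rle_dec a2 a3); destruct (Rle_dec a1 _); lra.
Qed.

Definition phi (k : Z) (p : Z * Z) : R :=
  let k1 := fst p in let k2 := snd p in let k3 := (k - k1 - k2)%Z in
  xw s k1 * xw s k2 + xw s k2 * xw s k3 + xw s k1 * xw s k3.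

Definition H3 (u v w : seqC) (k : Z) (p : Z * Z) : R :=
  hat s u (fst p) * hat s v (snd p) * hat s w (k - fst p - snd p).

Lemma H3_nonneg u v w k p : 0 <= H3 u v w k p.
Proof. unfold H3. pose proof (hat_nonneg s u (fst p)). pose proof (hat_nonneg s v (snd p)).
  pose proof (hat_nonneg s w (k - fst p - snd p)). apply Rmult_le_pos; [apply Rmult_le_pos|]; auto. Qed.

Lemma phi_nonneg k p : 0 <= phi k p.
Proof. unfold phi. pose proof (xw_nonneg s (fst p)). pose proof (xw_nonneg s (snd p)).
  pose proof (xw_nonneg s (k - fst p - snd p)). nra. Qed.

Lemma Cmod_cexpi x : Cmod (cexpi x) = 1.
Proof. unfold Cmod, cexpi; simpl. pose proof (sin2_cos2 x). unfold Rsqr in H.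
  replace (cos x * (cos x * 1) + sin x * (sin x * 1)) with 1 by lra. apply sqrt_1. Qed.

Lemma pointwise t u v w k p : k <> 0%Z ->
  wt s k * Cmod (R3_term t u v w k p) <= Rpower 3 s * (H3 u v w k p * phi k p).
Proof.
  intros Hk. destruct p as [k1 k2]. unfold R3_term, H3, phi. simpl fst; simpl snd.
  set (k3 := (k - k1 - k2)%Z).
  destruct (Z.eqb_spec k1 0) as [E1|E1]; [| destruct (Z.eqb_spec k2 0) as [E2|E2]; [| destruct (Z.eqb_spec k3 0) as [E3|E3]]]; simpl.
  1-3: rewrite Cmod_0, Rmult_0_r; apply Rmult_le_pos; [left; apply Rpower_pos|];
     apply Rmult_le_pos; [exact (H3_nonneg u v w k (k1, k2)) | exact (phi_nonneg k (k1,k2))].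
  rewrite !Cmod_mult, Cmod_cexpi, Cmod_inv, Cmod_R.
  2: { intros E. apply (f_equal fst) in E. simpl in E. apply eq_IZR in E. lia. }
  assert (Hc : / Rabs (IZR k1) <= 1).
  { rewrite Rabs_Zabs. assert (1 <= IZR (Z.abs k1)) by (apply IZR_le; lia).
    rewrite <- Rinv_1. apply Rinv_le_contravar; lra. }
  assert (Hk' : k = (k1 + k2 + k3)%Z) by (unfold k3; lia).
  assert (Hw := wt_tri k1 k2 k3 E1 E2 E3 ltac:(lia)). rewrite <- Hk' in Hw.
  unfold hat, xw. fold k3.
  destruct (Z.eqb_spec k1 0); [lia|]. destruct (Z.eqb_spec k2 0); [lia|]. destruct (Z.eqb_spec k3 0); [lia|].
  pose proof (wt_pos s k1); pose proof (wt_pos s k2); pose proof (wt_pos s k3); pose proof (wt_pos s k).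
  set (U := Cmod (u k1)). set (V := Cmod (v k2)). set (W := Cmod (w k3)).
  assert (0 <= U) by apply Cmod_ge_0. assert (0 <= V) by apply Cmod_ge_0. assert (0 <= W) by apply Cmod_ge_0.
  replace (Rpower 3 s * (wt s k1 * U * (wt s k2 * V) * (wt s k3 * W) *
     (/ wt s k1 * / wt s k2 + / wt s k2 * / wt s k3 + / wt s k1 * / wt s k3)))
    with (Rpower 3 s * (wt s k1 + wt s k2 + wt s k3) * (U * V * W)) by (field; repeat split; lra).
  assert (0 <= U * V * W) by (apply Rmult_le_pos; [apply Rmult_le_pos|]; auto).
  assert (0 <= / Rabs (IZR k1)) by (left; apply Rinv_0_lt_compat, Rabs_pos_lt, not_0_IZR; auto).
  assert (wt s k * (1 * / Rabs (IZR k1) * U * V * W) <= wt s k * (U * V * W)).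
  { apply Rmult_le_compat_l; [lra|]. replace (1 * / Rabs (IZR k1) * U * V * W) with (/ Rabs (IZR k1) * (U * V * W)) by ring.
    rewrite <- (Rmult_1_l (U * V * W)) at 2. apply Rmult_le_compat_r; auto. }
  eapply Rle_trans; [exact H9|]. apply Rmult_le_compat_r; auto.
Qed.

End Est.


Lemma lsumR_ext {I : Type} (f g : I -> R) l : (forall i, f i = g i) -> lsumR f l = lsumR g l.
Proof. intros H; induction l; simpl; auto. rewrite H, IHl; auto. Qed.

Lemma lsumR_mul_bound {I : Type} (F G : I -> R) l Y : (forall i, 0 <= F i) -> (forall i, In i l -> G i <= Y) ->
  lsumR (fun i => F i * G i) l <= Y * lsumR F l.
Proof. intros HF HG. rewrite <- lsumR_scal. apply lsumR_le. intros i Hi. specialize (HG i Hi). specialize (HF i). nra. Qed.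

Section Sums.
Variable s : R.
Hypothesis hs : 1/2 < s.
Let y j := xw s j ^ 2.

Lemma y_nonneg j : 0 <= y j.
Proof. apply pow2_ge_0. Qed.

Lemma inner_y (c : Z) N : lsumR (fun j => y (c - j)%Z) (zr N) <= Ybd s.
Proof.
  rewrite <- (lsumR_map (fun j => (c - j)%Z) y). apply riem_list; auto.
  apply map_shift_NoDup, NoDup_zr.
Qed.

Lemma y_sum N : lsumR y (zr N) <= Ybd s.
Proof. apply riem_zr; auto. Qed.

Lemma phi_sum k N : lsumR (fun p => phi s k p ^ 2) (box N) <= 9 * Ybd s ^ 2.
Proof.
  assert (HY : 0 <= Ybd s) by (eapply Rle_trans; [apply (lsumR_nonneg y (zr 0) y_nonneg)| apply y_sum]).
  eapply Rle_trans.
  { apply lsumR_le. intros p _.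
    assert (phi s k p ^ 2 <= 3 * (y (fst p) * y (snd p)) + 3 * (y (snd p) * y (k - fst p - snd p)%Z) + 3 * (y (fst p) * y (k - fst p - snd p)%Z)).
    { unfold phi, y. cbv zeta.
      set (x1 := xw s (fst p)). set (x2 := xw s (snd p)). set (x3 := xw s (k - fst p - snd p)).
      assert (Q : forall a b c : R, (a + b + c)^2 <= 3 * (a^2 + b^2 + c^2)).
      { intros a b c. pose proof (pow2_ge_0 (a - b)). pose proof (pow2_ge_0 (b - c)). pose proof (pow2_ge_0 (a - c)). nra. }
      specialize (Q (x1 * x2) (x2 * x3) (x1 * x3)).
      replace (x1 ^ 2 * x2 ^ 2) with ((x1 * x2)^2) by ring.
      replace (x2 ^ 2 * x3 ^ 2) with ((x2 * x3)^2) by ring.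
      replace (x1 ^ 2 * x3 ^ 2) with ((x1 * x3)^2) by ring. lra. }
    exact H. }
  rewrite !lsumR_plus, !lsumR_scal. unfold box. rewrite !lsumR_prod. simpl.
  assert (HS := y_sum N).
  assert (T1 : lsumR (fun a => lsumR (fun b => y a * y b) (zr N)) (zr N) <= Ybd s * Ybd s).
  { rewrite (lsumR_ext _ (fun a => y a * lsumR y (zr N))) by (intros; apply lsumR_scal).
    eapply Rle_trans; [apply lsumR_mul_bound with (Y := Ybd s); [apply y_nonneg| intros; apply HS]|].
    apply Rmult_le_compat_l; auto. }
  assert (T2 : lsumR (fun a => lsumR (fun b => y b * y (k - a - b)%Z) (zr N)) (zr N) <= Ybd s * Ybd s).
  { rewrite lsumR_exch.
    rewrite (lsumR_ext _ (fun b => y b * lsumR (fun a => y ((k - b) - a)%Z) (zr N))).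
    2: { intros b. rewrite <- lsumR_scal. apply lsumR_ext. intros a. do 2 f_equal. lia. }
    eapply Rle_trans; [apply lsumR_mul_bound with (Y := Ybd s); [apply y_nonneg| intros; apply inner_y]|].
    apply Rmult_le_compat_l; auto. }
  assert (T3 : lsumR (fun a => lsumR (fun b => y a * y (k - a - b)%Z) (zr N)) (zr N) <= Ybd s * Ybd s).
  { rewrite (lsumR_ext _ (fun a => y a * lsumR (fun b => y ((k - a) - b)%Z) (zr N))).
    2: { intros a. rewrite <- lsumR_scal. apply lsumR_ext. intros b. do 2 f_equal. }
    eapply Rle_trans; [apply lsumR_mul_bound with (Y := Ybd s); [apply y_nonneg| intros; apply inner_y]|].
    apply Rmult_le_compat_l; auto. }
  lra.
Qed.
End Sums.


Lemma lim_sum (K : list Z) (c : Z -> R) (D : Z -> nat -> R) :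
  (forall k, In k K -> 0 <= c k /\ exists A, c k <= A /\ is_lim_seq (D k) A) ->
  exists L, lsumR (fun k => c k ^ 2) K <= L /\ is_lim_seq (fun N => lsumR (fun k => D k N ^ 2) K) L.
Proof.
  induction K as [|a K IH]; intros H.
  - exists 0. split; [simpl; lra|]. apply (is_lim_seq_ext (fun _ => 0)); [intros; reflexivity| apply is_lim_seq_const].
  - destruct IH as [L' [HL1 HL2]]; [intros; apply H; right; auto|].
    destruct (H a (or_introl eq_refl)) as [Hc [A [HcA HA]]].
    exists (A ^ 2 + L'). split.
    + rewrite lsumR_cons. assert (c a ^ 2 <= A ^ 2) by (apply pow_incr; lra). lra.
    + apply (is_lim_seq_ext (fun N => D a N ^ 2 + lsumR (fun k => D k N ^ 2) K)); [intros; rewrite lsumR_cons; auto|].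
      apply is_lim_seq_plus'; auto.
      apply (is_lim_seq_ext (fun N => D a N * D a N)); [intros; ring|].
      replace (A ^ 2) with (A * A) by ring. apply is_lim_seq_mult'; auto.
Qed.

Section Main.
Variable s : R.
Hypothesis hs : 1/2 < s.

Lemma Series_nonneg a : inHs s a -> 0 <= Series (Hs_term s a).
Proof. intros H. apply (psum_le_Series (Hs_term s a) 0); auto. intros; apply Hs_term_nonneg. Qed.

Lemma gsum (u v w : seqC) : inHs s u -> inHs s v -> inHs s w -> forall K N, NoDup K ->
  lsumR (fun k => lsumR (fun p => H3 s u v w k p ^ 2) (box N)) K <=
  Series (Hs_term s u) * Series (Hs_term s v) * Series (Hs_term s w).
Proof.
  intros Hu Hv Hw K N HK.
  set (Nu := Series (Hs_term s u)). set (Nv := Series (Hs_term s v)). set (Nw := Series (Hs_term s w)).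
  rewrite lsumR_exch. unfold box. rewrite lsumR_prod.
  assert (Hin : forall a b, lsumR (fun k => H3 s u v w k (a, b) ^ 2) K <= (hat s u a ^ 2 * hat s v b ^ 2) * Nw).
  { intros a b. rewrite (lsumR_ext _ (fun k => (hat s u a ^ 2 * hat s v b ^ 2) * hat s w (k - (a + b))%Z ^ 2)).
    2: { intros k. unfold H3. simpl. replace (k - a - b)%Z with (k - (a + b))%Z by lia. ring. }
    rewrite lsumR_scal. apply Rmult_le_compat_l.
    - apply Rmult_le_pos; apply pow2_ge_0.
    - rewrite <- (lsumR_map (fun k => (k - (a + b))%Z) (fun j => hat s w j ^ 2)).
      apply Hs_list; auto. apply map_shift_NoDup'; auto. }
  eapply Rle_trans.
  { apply lsumR_le; intros a _. apply lsumR_le; intros b _. apply Hin. }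
  rewrite (lsumR_ext _ (fun a => (hat s u a ^ 2 * Nw) * lsumR (fun b => hat s v b ^ 2) (zr N))).
  2: { intros a. rewrite <- lsumR_scal. apply lsumR_ext. intros b; ring. }
  assert (HNv : lsumR (fun b => hat s v b ^ 2) (zr N) <= Nv) by (apply Hs_list; auto; apply NoDup_zr).
  assert (HNu : lsumR (fun b => hat s u b ^ 2) (zr N) <= Nu) by (apply Hs_list; auto; apply NoDup_zr).
  assert (0 <= Nw) by (apply Series_nonneg; auto).
  assert (0 <= Nu) by (apply Series_nonneg; auto).
  assert (0 <= lsumR (fun b => hat s v b ^ 2) (zr N)) by (apply lsumR_nonneg; intros; apply pow2_ge_0).
  assert (0 <= lsumR (fun b => hat s u b ^ 2) (zr N)) by (apply lsumR_nonneg; intros; apply pow2_ge_0).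
  rewrite (lsumR_ext _ (fun a => (Nw * lsumR (fun b => hat s v b ^ 2) (zr N)) * hat s u a ^ 2)) by (intros; ring).
  rewrite lsumR_scal.
  assert (Nw * lsumR (fun b => hat s v b ^ 2) (zr N) <= Nw * Nv) by (apply Rmult_le_compat_l; auto).
  assert (0 <= Nw * lsumR (fun b => hat s v b ^ 2) (zr N)) by (apply Rmult_le_pos; auto).
  assert (Nw * lsumR (fun b => hat s v b ^ 2) (zr N) * lsumR (fun b => hat s u b ^ 2) (zr N) <= Nw * Nv * Nu).
  { apply Rmult_le_compat; auto. }
  lra.
Qed.

End Main.


Theorem lemma7p17 (s : R) (hs : 1/2 < s) :
  exists c6 : R, forall (t : R) (u v w : seqC),
    inHs s u -> inHs s v -> inHs s w ->
    exists r : seqC, is_R3 t u v w r /\ inHs s r /\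
      Hs_norm s r <= c6 * Hs_norm s u * Hs_norm s v * Hs_norm s w.
Proof.
  set (c0 := Rpower 3 s ^ 2 * (9 * Ybd s ^ 2)).
  assert (Hc0 : 0 <= c0) by (unfold c0; apply Rmult_le_pos; [apply pow2_ge_0| pose proof (pow2_ge_0 (Ybd s)); lra]).
  exists (sqrt c0). intros t u v w Hu Hv Hw.
  set (Nu := Series (Hs_term s u)). set (Nv := Series (Hs_term s v)). set (Nw := Series (Hs_term s w)).
  assert (HNu : 0 <= Nu) by (apply Series_nonneg; auto).
  assert (HNv : 0 <= Nv) by (apply Series_nonneg; auto).
  assert (HNw : 0 <= Nw) by (apply Series_nonneg; auto).
  set (Q := Nu * Nv * Nw).
  assert (HQ : 0 <= Q) by (unfold Q; apply Rmult_le_pos; [apply Rmult_le_pos|]; auto).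
  set (f := R3_term t u v w).
  set (B := fun k N => lsumR (fun p => Cmod (f k p)) (box N)).
  assert (HB0 : forall k N, 0 <= B k N) by (intros; apply lsumR_nonneg; intros; apply Cmod_ge_0).
  assert (est : forall k N, k <> 0%Z ->
     (wt s k * B k N) ^ 2 <= c0 * lsumR (fun p => H3 s u v w k p ^ 2) (box N)).
  { intros k N Hk.
    assert (L1 : wt s k * B k N <= Rpower 3 s * lsumR (fun p => H3 s u v w k p * phi s k p) (box N)).
    { unfold B. rewrite <- !lsumR_scal. apply lsumR_le. intros p _. apply pointwise; auto. }
    assert (L0 : 0 <= wt s k * B k N) by (apply Rmult_le_pos; [left; apply wt_pos| apply HB0]).
    assert (L2 := CS (H3 s u v w k) (phi s k) (box N)).
    assert (L3 := phi_sum s hs k N).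
    assert (L4 : 0 <= lsumR (fun p => H3 s u v w k p ^ 2) (box N)) by (apply lsumR_nonneg; intros; apply pow2_ge_0).
    eapply Rle_trans; [apply pow_incr; split; [exact L0| exact L1]|].
    rewrite Rpow_mult_distr. unfold c0.
    assert (E : lsumR (fun p => H3 s u v w k p ^ 2) (box N) * lsumR (fun p => phi s k p ^ 2) (box N) <=
                lsumR (fun p => H3 s u v w k p ^ 2) (box N) * (9 * Ybd s ^ 2)) by (apply Rmult_le_compat_l; auto).
    pose proof (pow2_ge_0 (Rpower 3 s)).
    assert (Rpower 3 s ^ 2 * lsumR (fun p => H3 s u v w k p * phi s k p) (box N) ^ 2 <=
            Rpower 3 s ^ 2 * (lsumR (fun p => H3 s u v w k p ^ 2) (box N) * (9 * Ybd s ^ 2))).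
    { apply Rmult_le_compat_l; auto. lra. }
    lra. }
  assert (gK1 : forall k N, lsumR (fun p => H3 s u v w k p ^ 2) (box N) <= Q).
  { intros k N. pose proof (gsum s u v w Hu Hv Hw (k :: nil) N) as G.
    simpl lsumR in G. rewrite Rplus_0_r in G. apply G. constructor; [auto| constructor]. }
  assert (exr : forall k, exists a : C, k <> 0%Z -> has_sum (f k) a /\ abs_summable (f k) /\
             exists A, Cmod a <= A /\ is_lim_seq (B k) A).
  { intros k. destruct (Z.eq_dec k 0) as [E|E]; [exists (RtoC 0); intros; contradiction|].
    destruct (summable (f k) (1 + c0 * Q)) as [a [A [H1 [H2 [H3 H4]]]]].
    - intros N. fold (B k N).
      assert (X1 : B k N <= wt s k * B k N).
      { pose proof (wt_ge1 s hs k E). pose proof (HB0 k N). nra. }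
      assert (X2 : (wt s k * B k N) ^ 2 <= c0 * Q).
      { eapply Rle_trans; [apply est; auto|]. apply Rmult_le_compat_l; auto. }
      assert (X3 : 0 <= wt s k * B k N) by (apply Rmult_le_pos; [left; apply wt_pos| apply HB0]).
      set (X := wt s k * B k N) in *.
      assert (0 <= c0 * Q) by (apply Rmult_le_pos; auto). destruct (Rle_lt_dec X 1); [lra|]. assert (X * 1 < X * X) by (apply Rmult_lt_compat_l; lra). simpl in X2. lra.
    - exists a. intros _. repeat split; auto. exists A; split; auto. }
  set (r := fun k => proj1_sig (constructive_indefinite_description _ (exr k))).
  assert (Hr : forall k, k <> 0%Z -> has_sum (f k) (r k) /\ abs_summable (f k) /\
             exists A, Cmod (r k) <= A /\ is_lim_seq (B k) A).
  { intros k Hk. unfold r. destruct (constructive_indefinite_description _ (exr k)) as [a Ha]. simpl. auto. }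
  assert (Hbd : forall M, lsumR (fun j => hat s r j ^ 2) (zr M) <= c0 * Q).
  { intros M.
    destruct (lim_sum (zr M) (hat s r) (fun k N => if Z.eqb k 0 then 0 else wt s k * B k N)) as [L [HL1 HL2]].
    - intros k _. split; [apply hat_nonneg|]. unfold hat.
      destruct (Z.eqb_spec k 0) as [E|E].
      + exists 0. split; [lra| apply is_lim_seq_const].
      + destruct (Hr k E) as [_ [_ [A [HA1 HA2]]]]. exists (wt s k * A). split.
        * apply Rmult_le_compat_l; auto. left; apply wt_pos.
        * apply is_lim_seq_mult'; auto. apply is_lim_seq_const.
    - eapply Rle_trans; [exact HL1|].
      assert (Hpt : forall N, lsumR (fun k => (if Z.eqb k 0 then 0 else wt s k * B k N) ^ 2) (zr M) <= c0 * Q).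
      { intros N. eapply Rle_trans.
        2: { assert (G := gsum s u v w Hu Hv Hw (zr M) N (NoDup_zr M)). fold Nu Nv Nw Q in G.
             apply (Rmult_le_compat_l c0) in G; auto. rewrite <- lsumR_scal in G. exact G. }
        apply lsumR_le. intros k _. destruct (Z.eqb_spec k 0) as [E|E].
        - simpl. rewrite Rmult_0_l. apply Rmult_le_pos; auto. apply lsumR_nonneg; intros; apply pow2_ge_0.
        - apply est; auto. }
      assert (H := is_lim_seq_le _ (fun _ => c0 * Q) _ _ Hpt HL2 (is_lim_seq_const _)).
      simpl in H. exact H. }
  destruct (Hs_from_bound s r (c0 * Q) Hbd) as [Hrs HrS].
  exists r. split; [| split; auto].
  - intros k Hk. destruct (Hr k Hk) as [H1 [H2 _]]. split; auto.
  - unfold Hs_norm. fold Nu Nv Nw. clearbody c0 Nu Nv Nw.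
    rewrite <- !sqrt_mult; try (repeat apply Rmult_le_pos; auto; fail).
    apply sqrt_le_1_alt. replace (c0 * Nu * Nv * Nw) with (c0 * Q) by (unfold Q; ring). exact HrS.
    all: repeat apply Rmult_le_pos; auto.
Qed.
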